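(* Let $\epsilon\in\{1,-1\}\subseteq\mathbb{F}_{p^m}$, $\phi(x)=x^2+\epsilon\gamma x+\frac{\gamma^2}{2}$, $\mathsf{R}_{\epsilon\gamma}=R[x]/\langle\phi(x)^{p^s}\rangle$. Let $1\le i\le p^s-1$, $0\le t<i$, and let $h(x)$ be either $0$ or a unit of $\mathsf{R}_{\epsilon\gamma}$ of the form $\sum_{j}(a_{j0}x+b_{j0})\phi(x)^j$ with $a_{j0},b_{j0}\in\mathbb{F}_{p^m}$, $a_{00}x+b_{00}\neq0$. Then the smallest integer $U$ with $u\,\phi(x)^U\in\langle \phi(x)^i+u\,\phi(x)^th(x)\rangle$ is $$U=\begin{cases} i & \text{if } h(x)=0,\\ \min\{i,\ p^s-i+t\} & \text{if } h(x) \text{ is a unit in } \mathsf{R}_{\epsilon\gamma}.\end{cases}$$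
   Context: Let $p$ be an odd prime and $m,s$ positive integers with $p^m\equiv 3\pmod 4$; $\mathbb{F}_{p^m}$ is the field with $p^m$ elements and $R=\mathbb{F}_{p^m}[u]/\langle u^2\rangle$. Fix $\alpha\in\mathbb{F}_{p^m}\setminus\{0\}$ that is not a square in $\mathbb{F}_{p^m}$, let $\alpha_0\in\mathbb{F}_{p^m}$ satisfy $\alpha_0^{p^s}=\alpha$, and let $\gamma\in\mathbb{F}_{p^m}$ satisfy $\gamma^4+4\alpha_0=0$. *)

(* Defs.v *)
From HB Require Import structures.
From mathcomp Require Import all_boot all_order all_algebra all_field.
Set Implicit Arguments. Unset Strict Implicit. Unset Printing Implicit Defensive.
Import GRing.Theory.
Local Open Scope ring_scope.

(* An element a0 + u*a1 of R[x], where R = F[u]/<u^2>, is represented by the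
   pair (a0, a1) of polynomials over F (R[x] = F[x] (+) u F[x]). *)
Definition Rpoly (F : fieldType) := ({poly F} * {poly F})%type.

(* multiplication in R[x]:  (a0 + u a1)(b0 + u b1) = a0 b0 + u (a0 b1 + a1 b0) *)
Definition Rmul (F : fieldType) (f g : Rpoly F) : Rpoly F :=
  (f.1 * g.1, f.1 * g.2 + f.2 * g.1).

Definition Rcong (F : fieldType) (M : {poly F}) (f g : Rpoly F) : bool :=
  (M %| f.1 - g.1) && (M %| f.2 - g.2).

Definition Rideal_mem (F : fieldType) (M : {poly F}) (g y : Rpoly F) : Prop :=
  exists f : Rpoly F, Rcong M (Rmul f g) y.

Definition Runit (F : fieldType) (M : {poly F}) (g : Rpoly F) : Prop :=
  exists f : Rpoly F, Rcong M (Rmul f g) (1, 0).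

Definition phi_poly (F : fieldType) (eps gamma : F) : {poly F} :=
  'X^2 + (eps * gamma) *: 'X + (gamma ^+ 2 / 2%:R)%:P.

(* Main.v *)
Require Import Defs.
From HB Require Import structures.
From mathcomp Require Import all_boot all_order all_algebra all_field.
From mathcomp Require Import ring.
Import GRing.Theory.
Local Open Scope ring_scope.

Lemma phi_size (F : fieldType) (eps gamma : F) : size (phi_poly eps gamma) = 3%N.
Proof.
rewrite /phi_poly -addrA size_addl ?size_polyXn //.
rewrite (leq_ltn_trans (size_add _ _)) // gtn_max.
rewrite (leq_ltn_trans (size_scale_leq _ _)) ?size_polyX //.
by rewrite (leq_ltn_trans (size_polyC_leq1 _)).
Qed.

Lemma phi_pow_dvd (F : fieldType) (eps gamma : F) (a b : nat) :
  phi_poly eps gamma ^+ a %| phi_poly eps gamma ^+ b -> (a <= b)%N.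
Proof.
set q := phi_poly eps gamma.
have q0 : q != 0 by rewrite -size_poly_gt0 phi_size.
move=> H; rewrite leqNgt; apply/negP => ltba.
move: H; rewrite -[q ^+ b]mul1r dvdp_exp_sub // dvdp1 -eqSS.
have := size_exp q (a - b); rewrite phi_size /= => E.
have S0 : size (q ^+ (a - b)) != 0%N by rewrite size_poly_eq0 expf_neq0.
rewrite -(prednK (n:=size _)) ?lt0n // E.
by rewrite eqSS; move: ltba; rewrite -subn_gt0; case: (a - b)%N.
Qed.

Theorem proposition3p13 (p m s : nat) (F : finFieldType)
  (hp : prime p) (hp2 : p != 2%N) (hm : (0 < m)%N) (hs : (0 < s)%N)
  (hcard : #|F| = (p ^ m)%N) (h34 : (p ^ m %% 4 = 3)%N)
  (alpha alpha0 gamma : F) (halpha : alpha != 0)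
  (hnsq : ~ exists y : F, y ^+ 2 = alpha)
  (halpha0 : alpha0 ^+ (p ^ s) = alpha)
  (hgamma : gamma ^+ 4 + 4%:R * alpha0 = 0)
  (eps : F) (heps : eps = 1 \/ eps = -1)
  (i t : nat) (hi1 : (1 <= i)%N) (hi2 : (i <= p ^ s - 1)%N) (ht : (t < i)%N)
  (h : {poly F})
  (hh : h = 0 \/
        (Runit ((phi_poly eps gamma) ^+ (p ^ s)) (h, 0) /\
         exists a b : nat -> F,
           h = \sum_(j < p ^ s) (a j *: 'X + (b j)%:P) * (phi_poly eps gamma) ^+ j
           /\ (a 0%N *: 'X + (b 0%N)%:P != 0))) :
  let phi := phi_poly eps gamma in
  let N := (p ^ s)%N in
  let P := fun U : nat =>
    Rideal_mem (phi ^+ N) (phi ^+ i, phi ^+ t * h) (0, phi ^+ U) in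
  let U0 := if h == 0 then i else minn i (N - i + t) in
  P U0 /\ (forall V : nat, P V -> (U0 <= V)%N).
Proof.
move=> phi N P U0.
have q0 : phi != 0 by rewrite -size_poly_gt0 phi_size.
have iN : (i <= N)%N by apply: (leq_trans hi2); rewrite leq_subr.
have U0i : (U0 <= i)%N by rewrite /U0; case: (h == 0) => //; rewrite geq_minl.
split.
  case: (boolP (h == 0)) => [/eqP h0|hn0].
    rewrite /U0 /P h0 ?eqxx; exists (0, 1).
    by rewrite /Rcong /Rmul /= ?mul0r ?mul1r ?mulr0 ?add0r ?subrr ?oppr0 ?dvdp0.
  have Ue : U0 = minn i (N - i + t) by rewrite /U0 (negbTE hn0).
  case: (leqP i (N - i + t)) => [le|lt].
    rewrite /P Ue (minn_idPl le); exists (0, 1).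
    by rewrite /Rcong /Rmul /= ?mul0r ?mul1r ?mulr0 ?add0r ?subrr ?oppr0 ?dvdp0.
  rewrite /P Ue (minn_idPr (ltnW lt)).
  case: hh => [h0|[[[v w]] /andP[Hv _] _]]; first by move: hn0; rewrite h0 eqxx.
  move: Hv => /= Hv.
  exists (phi ^+ (N - i) * v, 0) ; rewrite /Rcong /Rmul /=.
  apply/andP; split.
    by rewrite subr0 mulrAC -exprD subnK // dvdp_mulr.
  rewrite mul0r addr0.
  have -> : phi ^+ (N - i) * v * (phi ^+ t * h) - phi ^+ (N - i + t)
    = phi ^+ (N - i + t) * (v * h - 1).
    by rewrite exprD; ring.
  by rewrite dvdp_mull.
move=> V [[f1 f2]] /andP[/= H1 H2].
move: H1 H2; rewrite /Rmul /= subr0 => H1 H2.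
suff: phi ^+ U0 %| phi ^+ V by apply: phi_pow_dvd.
have dN : phi ^+ U0 %| phi ^+ N by apply: dvdp_exp2l; apply: leq_trans iN.
have d1 : phi ^+ U0 %| f1 * (phi ^+ t * h).
  case: (boolP (h == 0)) => [/eqP ->|hn0]; first by rewrite !mulr0 dvdp0.
  have Ue : U0 = minn i (N - i + t) by rewrite /U0 (negbTE hn0).
  have : phi ^+ (N - i) %| f1.
    by rewrite -(dvdp_exp_sub f1 N i q0).
  case/dvdpP => q ->.
  rewrite mulrA dvdp_mulr // -mulrA dvdp_mull // -exprD.
  by apply: dvdp_exp2l; rewrite Ue geq_minr.
have d2 : phi ^+ U0 %| f2 * phi ^+ i by rewrite dvdp_mull // dvdp_exp2l.
have := dvdp_trans dN H2.
move=> H3.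
have := dvdp_sub (dvdp_add d1 d2) H3.
by rewrite opprB addrC subrK.
Qed.
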